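(* Let $k,n\in\mathbb N^+$ and $\mathbf C=(c_0,\dots,c_k)\in\{0,1\}^{k+1}$. For every integer $m\ge c_k-1$, $$O_{\mathbf C}(n+1,m+1)=n^kF_{n+1}(\mathbf C)\,O_{\mathbf C}(n,m)+n^kF_{n+1}(\mathbf C')\,O_{\mathbf C}(n,m+1),$$ and the boundary values are $O_{\mathbf C}(n,m)=0$ whenever $m=c_k-1$ or $m>c_k-1+n$, and $O_{\mathbf C}(1,c_k)=1$.
   Context: Fix integers $k\ge 1$, $n\ge 1$ and a vector $\mathbf C=(c_0,c_1,\dots,c_k)\in\{0,1\}^{k+1}$; put $\mathbf C'=(1,\dots,1)-\mathbf C$. Consider $k$-tuples $(\pi_1,\dots,\pi_k)$ of permutations of $\{1,\dots,n\}$. A position $\alpha\in\{1,\dots,n\}$ is a record of a permutation $\pi$ if $\pi(\alpha)<\pi(\alpha')$ for every $\alpha'<\alpha$ (position $1$ is always a record); equivalently, records index the minimal elements of the points $(\alpha,\pi(\alpha))$ under strict componentwise domination. For a tuple, let $l_\alpha$ be the number of $\beta\in\{1,\dots,k\}$ for which $\alpha$ is a record of $\pi_\beta$ (so $l_1=k$). The $\mathbf C$ sequential optimization set of the tuple is $S=\{\alpha: c_{l_\alpha}=1\}$, with weight $|S|$. For an integer $m$, $O_{\mathbf C}(n,m)$ is the number of $k$-tuples of permutations of $\{1,\dots,n\}$ whose weight equals $m$ (so it is $0$ for $m<0$ or $m>n$). For $j\ge 2$ and $X=(x_0,\dots,x_k)\in\mathbb R^{k+1}$, $F_j(X)=\sum_{\beta=0}^k\binom{k}{\beta}\frac{x_\beta}{(j-1)^\beta}$.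 *)

(* Defs.v *)
From HB Require Import structures.
From mathcomp Require Import all_boot all_order all_algebra.
From mathcomp Require Import perm.
Set Implicit Arguments. Unset Strict Implicit. Unset Printing Implicit Defensive.
Import Order.TTheory GRing.Theory Num.Theory.

(* Permutations of {1,...,n} are modelled as 'S_n (permutations of 'I_n =
   {0,...,n-1}); positions and values are shifted by one, which does not
   affect records. *)

Definition is_record (n : nat) (p : 'S_n) (a : 'I_n) : bool :=
  [forall b : 'I_n, (b < a)%N ==> (p a < p b)%N].

Definition lcount (k n : nat) (t : {ffun 'I_k -> 'S_n}) (a : 'I_n) : nat :=
  #|[set b : 'I_k | is_record (t b) a]|.

Definition seqopt_set (k n : nat) (C : {ffun 'I_k.+1 -> bool})
    (t : {ffun 'I_k -> 'S_n}) : {set 'I_n} :=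
  [set a : 'I_n | C (inord (lcount t a))].

Definition weight (k n : nat) (C : {ffun 'I_k.+1 -> bool})
    (t : {ffun 'I_k -> 'S_n}) : nat := #|seqopt_set C t|.

Definition O (k : nat) (C : {ffun 'I_k.+1 -> bool}) (n : nat) (m : int) : nat :=
  #|[set t : {ffun 'I_k -> 'S_n} | Posz (weight C t) == m]|.

Definition Ccomp (k : nat) (C : {ffun 'I_k.+1 -> bool}) : {ffun 'I_k.+1 -> bool} :=
  [ffun i => ~~ C i].

Definition F (k : nat) (j : nat) (X : {ffun 'I_k.+1 -> bool}) : rat :=
  (\sum_(b < k.+1) ('C(k, b))%:R * (X b : nat)%:R / (j.-1)%:R ^+ b)%R.

(* Main.v *)
Require Import Defs.
From mathcomp Require Import all_boot all_order all_algebra.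
From mathcomp Require Import perm zify ring.
Import Order.TTheory GRing.Theory Num.Theory.


Lemma rec_lift n (q : 'S_n) (v : 'I_n.+1) (i : 'I_n) :
  is_record (lift_perm ord_max v q) (lift ord_max i) = is_record q i.
Proof.
apply/forallP/forallP => H b.
  have := H (lift ord_max b); rewrite !lift_max !lift_perm_lift /=.
  by rewrite /bump /= !ltnNge leq_bump2.
case: (unliftP ord_max b) => [b'|] ->.
  rewrite !lift_max !lift_perm_lift /= /bump /= !ltnNge leq_bump2.
  by rewrite -!ltnNge; apply: H.
apply/implyP => /= H'; exfalso; move: H'; rewrite /bump; have := ltn_ord i; lia.
Qed.

Lemma rec_max n (q : 'S_n) (v : 'I_n.+1) :
  is_record (lift_perm ord_max v q) ord_max = (v == ord0).
Proof.
set p := lift_perm ord_max v q.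
apply/forallP/eqP => [H|Ev].
  apply/eqP; apply/negPn/negP => nz.
  set w := (p^-1)%g ord0.
  have pw : p w = ord0 by rewrite /w permKV.
  have wmax : w != ord_max.
    by apply/eqP => E; move: pw; rewrite E /p lift_perm_id => E'; rewrite E' eqxx in nz.
  have := H w; rewrite pw /p lift_perm_id.
  have -> : (w < @ord_max n) by rewrite ltn_neqAle -(inj_eq val_inj) in wmax *; rewrite wmax -ltnS ltn_ord.
  by rewrite /= ltn0.
move=> b; apply/implyP => lt.
have : p b != p ord_max.
  by rewrite (inj_eq perm_inj); apply/eqP => E; rewrite E ltnn in lt.
by rewrite /p lift_perm_id Ev lt0n.
Qed.


Lemma card_split n (A : {set 'I_n.+1}) :
  #|A| = (ord_max \in A) + #|[set i : 'I_n | lift ord_max i \in A]|.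
Proof.
rewrite (cardD1 ord_max) -[in RHS](card_imset _ (@lift_inj _ ord_max)); congr (_ + _).
apply: eq_card => x; rewrite inE.
case: (unliftP ord_max x) => [j|] ->.
  rewrite mem_imset; last exact: lift_inj.
  by rewrite inE lift_eqF.
rewrite eqxx /=; apply/esym/imsetP => -[j _ /eqP]; by rewrite eq_liftF.
Qed.

Definition Phi k n (x : {ffun 'I_k -> 'S_n} * {ffun 'I_k -> 'I_n.+1}) :
  {ffun 'I_k -> 'S_n.+1} := [ffun b => lift_perm ord_max (x.2 b) (x.1 b)].

Arguments Phi {k n}.
Definition zc k n (v : {ffun 'I_k -> 'I_n.+1}) : nat := #|[set b | v b == ord0]|.
Arguments zc {k n}.

Lemma weight_Phi k n (C : {ffun 'I_k.+1 -> bool}) (q : {ffun 'I_k -> 'S_n}) (v : {ffun 'I_k -> 'I_n.+1}) :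
  weight C (Phi (q, v)) = weight C q + C (inord (zc v)).
Proof.
rewrite /weight /seqopt_set card_split inE addnC; congr (_ + _).
  apply: eq_card => i; rewrite !inE; congr (C (inord _)).
  by apply: eq_card => b; rewrite !inE ffunE rec_lift.
congr (nat_of_bool (C (inord _))); apply: eq_card => b; by rewrite !inE ffunE rec_max.
Qed.

Lemma Phi_inj k n : injective (@Phi k n).
Proof.
move=> [q v] [q' v'] E.
have Ev : v = v'.
  apply/ffunP => b; have := congr1 (fun t : {ffun 'I_k -> 'S_n.+1} => t b ord_max) E.
  by rewrite /Phi !ffunE /= !lift_perm_id.
subst v'; congr pair; apply/ffunP => b; apply/permP => i.
have := congr1 (fun t : {ffun 'I_k -> 'S_n.+1} => t b (lift ord_max i)) E.
by rewrite /Phi !ffunE /= !lift_perm_lift => /lift_inj.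
Qed.

Lemma Phi_bij k n : bijective (@Phi k n).
Proof.
apply: inj_card_bij; first exact: Phi_inj.
rewrite card_prod !card_ffun !card_Sn !card_ord -expnMn factS mulnC.
by [].
Qed.


Lemma foldr_prod (T : Type) (f : T -> nat) (s : seq T) :
  foldr muln 1 (map f s) = \prod_(x <- s) f x.
Proof. by elim: s => [|x s IH]; rewrite ?big_nil ?big_cons //= IH. Qed.

Lemma card_zeroset k n (A : {set 'I_k}) :
  #|[pred v : {ffun 'I_k -> 'I_n.+1} | [set i | v i == ord0] == A]| = n ^ (k - #|A|).
Proof.
pose F := fun x : 'I_k => if x \in A then pred1 (@ord0 n) else predC1 (@ord0 n).
have -> : #|[pred v : {ffun 'I_k -> 'I_n.+1} | [set i | v i == ord0] == A]|
        = #|pfamily ord0 (predT : pred 'I_k) F|.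
  apply: eq_card => v; apply/idP/pfamilyP => [/eqP E|[_ H]].
    split; first by apply/subsetP.
    move=> x _; have := congr1 (fun S : {set 'I_k} => x \in S) E; rewrite /= inE /F.
    by case: (x \in A) => /= h; rewrite inE h.
  apply/eqP/setP => x; rewrite inE; have := H x isT; rewrite /F.
  by case: (x \in A); rewrite !inE => /= h; rewrite ?h ?(negbTE h).
rewrite card_pfamily /image_mem foldr_prod big_enum /=.
rewrite (eq_bigr (fun x => if x \in A then 1 else n)); last first.
  by move=> x _; rewrite /F; case: (x \in A); rewrite ?card1 ?cardC1 ?card_ord.
have -> : n ^ (k - #|A|) = \prod_(i in ~: A) n.
  have cA : #|~: A| = k - #|A| by have := cardsC A; rewrite card_ord; lia.
  by rewrite prod_nat_const cA.
rewrite big_mkcond [RHS]big_mkcond; apply: eq_bigr => i _.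
by rewrite !inE; case: (i \in A).
Qed.

Lemma card_zc k n b :
  #|[set v : {ffun 'I_k -> 'I_n.+1} | zc v == b]| = 'C(k, b) * n ^ (k - b).
Proof.
rewrite -sum1_card.
rewrite (partition_big (fun v : {ffun 'I_k -> 'I_n.+1} => [set i | v i == ord0])
           (fun A : {set 'I_k} => #|A| == b)); last by move=> v; rewrite inE.
rewrite (eq_bigr (fun _ => n ^ (k - b))); last first.
  move=> A /eqP <-; rewrite -card_zeroset -[RHS]sum1_card; apply: eq_bigl => v.
  rewrite !inE /zc; case E: ([set i | v i == ord0] == A); last by rewrite andbF.
  by move/eqP: E => ->; rewrite eqxx.
rewrite sum_nat_const; congr (_ * _).
have := card_draws 'I_k b; rewrite card_ord => <-.
by apply: eq_card => A; rewrite inE.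
Qed.


Lemma O_rec k n (C : {ffun 'I_k.+1 -> bool}) (m : int) :
  O C n.+1 (m + 1)%R =
  \sum_(v : {ffun 'I_k -> 'I_n.+1})
     (if C (inord (zc v)) then O C n m else O C n (m + 1)%R).
Proof.
rewrite /O -sum1_card big_mkcond /=.
rewrite (reindex (@Phi k n)); last exact: onW_bij _ (Phi_bij k n).
pose G (q : {ffun 'I_k -> 'S_n}) (v : {ffun 'I_k -> 'I_n.+1}) :=
  if Posz (weight C q + C (inord (zc v))) == (m + 1)%R then 1 else 0.
rewrite (eq_bigr (fun x => G x.1 x.2)); last first.
  by case=> q v _; rewrite inE weight_Phi.
rewrite -(pair_bigA _ G) exchange_big /=; apply: eq_bigr => v _.
rewrite /G; case: (C (inord (zc v))) => /=; rewrite -sum1_card [RHS]big_mkcond /=; apply: eq_bigr => q _; rewrite inE.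
  by congr (if _ then _ else _); apply/eqP/eqP; lia.
by rewrite addn0.
Qed.


Lemma zc_le k n (v : {ffun 'I_k -> 'I_n.+1}) : zc v <= k.
Proof. by rewrite /zc -[X in _ <= X](card_ord k) max_card. Qed.


Lemma sum_by_zc k n (g : 'I_k.+1 -> nat) :
  \sum_(v : {ffun 'I_k -> 'I_n.+1}) g (inord (zc v)) =
  \sum_(b < k.+1) 'C(k, b) * n ^ (k - b) * g b.
Proof.
rewrite (partition_big (fun v : {ffun 'I_k -> 'I_n.+1} => (inord (zc v) : 'I_k.+1)) predT) //.
apply: eq_bigr => b _.
rewrite (eq_bigr (fun _ => g b)); last by move=> v /eqP ->.
rewrite -card_zc -sum_nat_const; apply: eq_bigl => v; rewrite inE.
rewrite /=; apply/eqP/eqP => [<-|E]; first by rewrite inordK // ltnS zc_le.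
by apply: val_inj; rewrite /= inordK // ltnS zc_le.
Qed.


Lemma rec_rat k n (C : {ffun 'I_k.+1 -> bool}) (m : int) : (1 <= n)%N ->
     ((O C n.+1 (m + 1)%R)%:R : rat) =
       ((n%:R ^+ k * F n.+1 C * (O C n m)%:R)
        + (n%:R ^+ k * F n.+1 (Ccomp C) * (O C n (m + 1)%R)%:R))%R.
Proof.
move=> n1.
rewrite O_rec (@sum_by_zc k n (fun b => if C b then O C n m else O C n (m + 1)%R)) natr_sum.
rewrite /F /= !mulr_sumr !mulr_suml -big_split /=; apply: eq_bigr => b _.
have nU : (n%:R : rat) \is a GRing.unit by rewrite unitfE pnatr_eq0 -lt0n.
rewrite !natrM natrX exprB ?nU //; last by rewrite -ltnS ltn_ord.
rewrite ffunE; case: (C b) => /=; ring.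
Qed.


Lemma bounds k n (C : {ffun 'I_k.+1 -> bool}) (t : {ffun 'I_k -> 'S_n.+1}) :
  exists r, (r <= n)%N /\ weight C t = (C ord_max : nat) + r.
Proof.
rewrite /weight (cardD1 ord0).
exists #|[predD1 seqopt_set C t & ord0]|; split.
  have H : #|predC1 (@ord0 n)| <= n by rewrite cardC1 card_ord.
  apply: leq_trans H; apply: subset_leq_card.
  by apply/subsetP => x; rewrite !inE => /andP[].
congr (_ + _); rewrite inE; congr (nat_of_bool (C _)).
have Lk : lcount t ord0 = k.
  rewrite /lcount; transitivity #|[set: 'I_k]|; last by rewrite cardsT card_ord.
  by apply: eq_card => b; rewrite !inE; apply/forallP => x; rewrite ltn0.
by apply: val_inj; rewrite /= Lk inordK.
Qed.


Theorem theorem3p1 (k n : nat) (C : {ffun 'I_k.+1 -> bool}) :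
  (1 <= k)%N -> (1 <= n)%N ->
  (forall m : int, (Posz (C ord_max : nat) - 1 <= m)%R ->
     ((O C n.+1 (m + 1)%R)%:R : rat) =
       ((n%:R ^+ k * F n.+1 C * (O C n m)%:R)
        + (n%:R ^+ k * F n.+1 (Ccomp C) * (O C n (m + 1)%R)%:R))%R)
  /\ (forall m : int,
        (m = Posz (C ord_max : nat) - 1 \/ (Posz (C ord_max : nat) - 1 + Posz n < m))%R ->
        O C n m = 0%N)
  /\ O C 1 (Posz (C ord_max : nat)) = 1%N.
Proof.
move=> k1 n1; split; first by move=> m _; exact: rec_rat.
split.
  case: n n1 => [//|n'] _ m Hm.
  apply/eqP; rewrite cards_eq0; apply/eqP/setP => t; rewrite inE in_set0.
  apply/negbTE/eqP => E.
  have [r [Hr Hw]] := @bounds k n' C t.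
  move: E; rewrite Hw; case: (C ord_max) Hm => /=; lia.
rewrite /O.
have -> : [set t : {ffun 'I_k -> 'S_1} | Posz (weight C t) == Posz (C ord_max)] = setT.
  apply/setP => t; rewrite !inE.
  have [r [Hr Hw]] := @bounds k 0 C t.
  by rewrite Hw; apply/eqP; congr Posz; move: Hr; rewrite leqn0 => /eqP ->; rewrite addn0.
by rewrite cardsT card_ffun card_Sn card_ord exp1n.
Qed.
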